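(* Let $n>3$. Let $\mu_{1,1}^n$ be the complex commutative associative algebra with basis $e_1,\dots,e_n$ and only nonzero products $e_i\cdot e_j=e_{i+j}$ for $2\le i+j\le n-1$, and let $\mu_{1,2}^n$ be the one with only nonzero products $e_i\cdot e_j=e_{i+j}$ for $2\le i+j\le n-1$ and $e_n\cdot e_n=e_{n-1}$. Then: (1) if $(\mathcal{P},\cdot)=\mu_{1,1}^n$, then $Z^{2}(\mathcal{P},\mathcal{P})=\{\alpha\Delta_{1,n}(-,-)e_{n-1}+\beta\Delta_{1,n}(-,-)e_n:\alpha,\beta\in\mathbb{C}\}$; (2) if $(\mathcal{P},\cdot)=\mu_{1,2}^n$, then $Z^{2}(\mathcal{P},\mathcal{P})=\{\alpha\Delta_{1,n}(-,-)e_{n-1}:\alpha\in\mathbb{C}\}$.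
   Context: For a commutative associative algebra $(\mathcal{P},\cdot)$, $Z^{2}(\mathcal{P},\mathcal{P})$ is the set of all skew-symmetric bilinear maps $\theta:\mathcal{P}\times\mathcal{P}\to\mathcal{P}$ such that $\theta(\theta(x,y),z)+\theta(\theta(y,z),x)+\theta(\theta(z,x),y)=0$ and $\theta(x\cdot y,z)-\theta(x,z)\cdot y-x\cdot\theta(y,z)=0$ for all $x,y,z$. $\Delta_{1,n}$ denotes the skew-symmetric bilinear form with $\Delta_{1,n}(e_1,e_n)=1$, $\Delta_{1,n}(e_n,e_1)=-1$, and $\Delta_{1,n}(e_l,e_m)=0$ for all other pairs of basis vectors. *)

(* Defs.v *)
From HB Require Import structures.
From mathcomp Require Import all_boot all_order all_algebra.
From mathcomp Require Import reals complex.
Set Implicit Arguments. Unset Strict Implicit. Unset Printing Implicit Defensive.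
Import Order.TTheory GRing.Theory Num.Theory.
Local Open Scope ring_scope.

(* Complex numbers: R[i] for an arbitrary R : realType (any complete
   archimedean ordered field, i.e. a model of the reals). *)

(* The underlying space C^n with basis e_1,...,e_n; vectors are row vectors
   'rV[K]_n, and the basis vector e_k (1-based k) has a 1 at position k-1. *)
Definition bvec (K : pzRingType) (n k : nat) : 'rV[K]_n :=
  \row_(j < n) (if j.+1 == k then 1 else 0).

(* Bilinear extension of structure constants c i j k (1-based indices):
   e_i * e_j = sum_k c i j k e_k. *)
Definition bilin_of (K : pzRingType) (n : nat) (c : nat -> nat -> nat -> K)
  (x y : 'rV[K]_n) : 'rV[K]_n :=
  \row_(k < n) \sum_(i < n) \sum_(j < n) x 0 i * y 0 j * c i.+1 j.+1 k.+1.

Definition mu11_c (K : pzRingType) (n : nat) (i j k : nat) : K :=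
  if [&& 2 <= i + j, i + j <= n.-1 & k == i + j]%N then 1 else 0.

Definition mu12_c (K : pzRingType) (n : nat) (i j k : nat) : K :=
  if [&& 2 <= i + j, i + j <= n.-1 & k == i + j]%N then 1
  else if [&& i == n, j == n & k == n.-1]%N then 1 else 0.

Definition mu11 (K : pzRingType) (n : nat) := @bilin_of K n (@mu11_c K n).
Definition mu12 (K : pzRingType) (n : nat) := @bilin_of K n (@mu12_c K n).

Definition Delta_c (K : pzRingType) (n l m : nat) : K :=
  (if ((l == 1) && (m == n))%N then 1 else 0) - (if ((l == n) && (m == 1))%N then 1 else 0).

Definition Delta1n (K : pzRingType) (n : nat) (x y : 'rV[K]_n) : K :=
  \sum_(l < n) \sum_(m < n) x 0 l * y 0 m * Delta_c K n l.+1 m.+1.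

Definition in_Z2 (K : pzRingType) (n : nat)
  (mul theta : 'rV[K]_n -> 'rV[K]_n -> 'rV[K]_n) : Prop :=
  [/\ (forall (a : K) x y z, theta (a *: x + y) z = a *: theta x z + theta y z),
      (forall (a : K) x y z, theta x (a *: y + z) = a *: theta x y + theta x z),
      (forall x y, theta x y = - theta y x),
      (forall x y z, theta (theta x y) z + theta (theta y z) x
                     + theta (theta z x) y = 0) &
      (forall x y z, theta (mul x y) z - mul (theta x z) y - mul x (theta y z) = 0)].

(* Main.v *)
Require Import Defs.
From HB Require Import structures.
From mathcomp Require Import all_boot all_order all_algebra.
From mathcomp Require Import reals complex.
From mathcomp Require Import ring zify.
Import Order.TTheory GRing.Theory Num.Theory.
Local Open Scope ring_scope.
Set Implicit Arguments. Unset Strict Implicit.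

Section Gen.
Variable K : fieldType.
Variable n : nat.
Local Notation e k := (bvec K n k).
Local Notation RV := 'rV[K]_n.

Lemma bvecE k j : (e k) 0 j = if j.+1 == k then 1 else 0.
Proof. by rewrite mxE. Qed.

Lemma sum_bvec p (i0 : 'I_n) (F : 'I_n -> K) : i0.+1 = p ->
  \sum_(i < n) (e p) 0 i * F i = F i0.
Proof.
move=> hp; rewrite (bigD1 i0) //= big1 ?addr0; first by rewrite mxE hp eqxx mul1r.
move=> i hi; rewrite mxE; case: eqP => [h|]; last by rewrite mul0r.
exfalso; move/eqP: hi; apply; apply: val_inj => /=; lia.
Qed.

Lemma row_decomp (x : RV) : x = \sum_(l < n) x 0 l *: e l.+1.
Proof.
apply/rowP => j; rewrite summxE (bigD1 j) //= big1 ?addr0.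
  by rewrite !mxE eqxx mulr1.
move=> l hl; rewrite !mxE eqSS; case: eqP => [h|]; last by rewrite mulr0.
by exfalso; move/eqP: hl; apply; apply: val_inj.
Qed.

Lemma lin0 (f : RV -> RV) : (forall a x y, f (a *: x + y) = a *: f x + f y) -> f 0 = 0.
Proof. move=> hf; have h := hf 1 0 0; rewrite !scale1r addr0 in h.
by apply: (addrI (f 0)); rewrite addr0 -h. Qed.

Lemma lin_sum (f : RV -> RV) (I : finType) (a : I -> K) (v : I -> RV) :
  (forall a x y, f (a *: x + y) = a *: f x + f y) ->
  f (\sum_i a i *: v i) = \sum_i a i *: f (v i).
Proof.
move=> hf; have hadd : forall x y, f (x + y) = f x + f y.
  by move=> x y; rewrite -{1}(scale1r x) hf scale1r.
apply: (big_ind2 (fun x y => f x = y)).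
- exact: lin0.
- by move=> x1 x2 y1 y2 hx hy; rewrite hadd hx hy.
- by move=> i _; rewrite -[a i *: v i]addr0 hf (lin0 hf) addr0.
Qed.

Variable c : nat -> nat -> nat -> K.
Local Notation mul := (bilin_of c).

Lemma bilinDl a (x y z : RV) : mul (a *: x + y) z = a *: mul x z + mul y z.
Proof.
apply/rowP => k; rewrite !mxE mulr_sumr -big_split; apply: eq_bigr => i _ /=.
rewrite mulr_sumr -big_split; apply: eq_bigr => j _ /=; rewrite !mxE; ring.
Qed.

Lemma bilinDr a (x y z : RV) : mul x (a *: y + z) = a *: mul x y + mul x z.
Proof.
apply/rowP => k; rewrite !mxE mulr_sumr -big_split; apply: eq_bigr => i _ /=.
rewrite mulr_sumr -big_split; apply: eq_bigr => j _ /=; rewrite !mxE; ring.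
Qed.

Lemma mulE_l p (i0 : 'I_n) (y : RV) k : i0.+1 = p ->
  (mul (e p) y) 0 k = \sum_(j < n) y 0 j * c p j.+1 k.+1.
Proof.
move=> hp; rewrite mxE.
under eq_bigr => i _ do under eq_bigr => j _ do rewrite -mulrA.
under eq_bigr => i _ do rewrite -mulr_sumr.
by rewrite (sum_bvec _ hp) hp.
Qed.

Lemma mulE_r q (i0 : 'I_n) (x : RV) k : i0.+1 = q ->
  (mul x (e q)) 0 k = \sum_(i < n) x 0 i * c i.+1 q k.+1.
Proof.
move=> hq; rewrite mxE; apply: eq_bigr => i _.
under eq_bigr => j _ do rewrite mulrAC mulrC.
by rewrite (sum_bvec _ hq) hq.
Qed.

Lemma mul_bb p q (i0 j0 : 'I_n) k : i0.+1 = p -> j0.+1 = q ->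
  (mul (e p) (e q)) 0 k = c p q k.+1.
Proof.
move=> hp hq; rewrite (mulE_l _ _ hp).
by rewrite (sum_bvec _ hq) hq.
Qed.

Lemma mulb0l (y : RV) : mul 0 y = 0.
Proof. exact: (lin0 (fun a x z => bilinDl a x z y)). Qed.
Lemma mulb0r (x : RV) : mul x 0 = 0.
Proof. exact: (lin0 (fun a y z => bilinDr a x y z)). Qed.
Lemma mulZl a (x y : RV) : mul (a *: x) y = a *: mul x y.
Proof. by rewrite -[a *: x]addr0 bilinDl mulb0l addr0. Qed.
Lemma mulZr a (x y : RV) : mul x (a *: y) = a *: mul x y.
Proof. by rewrite -[a *: y]addr0 bilinDr mulb0r addr0. Qed.
Lemma mulDl (x y z : RV) : mul (x + y) z = mul x z + mul y z.
Proof. by rewrite -{1}(scale1r x) bilinDl scale1r. Qed.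
Lemma mulDr (x y z : RV) : mul x (y + z) = mul x y + mul x z.
Proof. by rewrite -{1}(scale1r y) bilinDr scale1r. Qed.
Lemma mulNl (x y : RV) : mul (- x) y = - mul x y.
Proof. by rewrite -scaleN1r mulZl scaleN1r. Qed.
Lemma mulNr (x y : RV) : mul x (- y) = - mul x y.
Proof. by rewrite -scaleN1r mulZr scaleN1r. Qed.

Lemma mul_zero_l p (i0 : 'I_n) (y : RV) : i0.+1 = p ->
  (forall j k, (1 <= j)%N -> c p j k = 0) -> mul (e p) y = 0.
Proof.
move=> hp h; apply/rowP => k; rewrite (mulE_l _ _ hp) mxE big1 // => j _.
by rewrite h ?mulr0.
Qed.
Lemma mul_zero_r q (i0 : 'I_n) (x : RV) : i0.+1 = q ->
  (forall j k, (1 <= j)%N -> c j q k = 0) -> mul x (e q) = 0.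
Proof.
move=> hq h; apply/rowP => k; rewrite (mulE_r _ _ hq) mxE big1 // => j _.
by rewrite h ?mulr0.
Qed.

Lemma mul_bb0 p q : (1 <= p <= n)%N -> (1 <= q <= n)%N ->
  (forall k, c p q k = 0) -> mul (e p) (e q) = 0.
Proof.
move=> hp hq h0; have hp' : (p.-1 < n)%N by lia. have hq' : (q.-1 < n)%N by lia.
apply/rowP => k; rewrite (@mul_bb p q (Ordinal hp') (Ordinal hq')) /=; try lia.
by rewrite h0 mxE.
Qed.

Hypothesis hn : (3 < n)%N.
Lemma lt0 : (0 < n)%N. Proof. lia. Qed.
Lemma lt2 : (n.-2 < n)%N. Proof. lia. Qed.
Lemma ltN : (n.-1 < n)%N. Proof. lia. Qed.
Definition o0 : 'I_n := Ordinal lt0.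
Definition o2 : 'I_n := Ordinal lt2.
Definition oN : 'I_n := Ordinal ltN.

Hypothesis H1 : forall a b k, (1 <= a)%N -> (1 <= b)%N -> (a + b <= n.-1)%N ->
  c a b k = if (k == a + b)%N then 1 else 0.
Hypothesis H2a : forall b k, (1 <= b)%N -> (b <= n.-2)%N -> c n.-1 b k = 0.
Hypothesis H2b : forall b k, (1 <= b)%N -> (b <= n.-2)%N -> c b n.-1 k = 0.
Hypothesis H2c : forall b k, (1 <= b)%N -> (b <= n.-2)%N -> c n b k = 0.
Hypothesis H2d : forall b k, (1 <= b)%N -> (b <= n.-2)%N -> c b n k = 0.

Lemma mul_e1 a : (2 <= a <= n.-1)%N -> mul (e 1) (e a.-1) = e a.
Proof.
move=> ha; have hb : (a.-2 < n)%N by lia.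
apply/rowP => k; rewrite (@mul_bb 1 a.-1 o0 (Ordinal hb)) //=; last by lia.
rewrite H1; try lia. rewrite mxE (_ : (1 + a.-1 = a)%N) //; lia.
Qed.

Lemma mul_n1 : mul (e n) (e 1) = 0.
Proof. apply: mul_bb0; try lia. by move=> k; apply: H2c; lia. Qed.

Variable th : RV -> RV -> RV.
Hypothesis HL : forall a x y z, th (a *: x + y) z = a *: th x z + th y z.
Hypothesis HR : forall a x y z, th x (a *: y + z) = a *: th x y + th x z.
Hypothesis Hs : forall x y, th x y = - th y x.
Hypothesis Hl : forall x y z, th (mul x y) z - mul (th x z) y - mul x (th y z) = 0.
Hypothesis two : (2:K) != 0.

Lemma Leib (x y z : RV) : th (mul x y) z = mul (th x z) y + mul x (th y z).
Proof. by apply/eqP; rewrite -subr_eq0 opprD addrA Hl. Qed.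
Lemma th0l (z : RV) : th 0 z = 0.
Proof. exact: (lin0 (fun a x y => HL a x y z)). Qed.
Lemma thxx (x : RV) : th x x = 0.
Proof.
have h := Hs x x.
have : (2:K) *: th x x = 0 by rewrite scaler_nat mulr2n {2}h subrr.
by move/eqP; rewrite scaler_eq0 (negbTE two) => /eqP.
Qed.

Lemma thsum_l (a : 'I_n -> K) (v : 'I_n -> RV) y :
  th (\sum_i a i *: v i) y = \sum_i a i *: th (v i) y.
Proof. have := (@lin_sum (fun u => th u y) _ a v (fun a u v => HL a u v y)). move=> /= h. exact h. Qed.
Lemma thsum_r (a : 'I_n -> K) (v : 'I_n -> RV) x :
  th x (\sum_i a i *: v i) = \sum_i a i *: th x (v i).
Proof. have := (@lin_sum (fun u => th x u) _ a v (fun a u v => HR a x u v)). move=> /= h. exact h. Qed.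

Local Notation T a b := (th (e a) (e b)).
Local Notation w := (T 1 n).

Lemma step a (z : RV) : (2 <= a <= n.-1)%N ->
  th (e a) z = mul (th (e 1) z) (e a.-1) + mul (e 1) (th (e a.-1) z).
Proof. by move=> ha; rewrite -Leib mul_e1. Qed.

Lemma TA a : (1 <= a <= n.-1)%N -> T a 1 = 0.
Proof.
elim: a => [//|a IH] ha.
case: (ltnP a 1) => a1.
  have -> : a = 0%N by lia.
  exact: thxx.
rewrite step /=; last lia.
by rewrite thxx mulb0l IH ?mulb0r ?addr0 //; lia.
Qed.

Lemma TB b : (1 <= b <= n.-1)%N -> T 1 b = 0.
Proof. by move=> hb; rewrite Hs TA ?oppr0. Qed.

Lemma TC a b : (1 <= a <= n.-1)%N -> (1 <= b <= n.-1)%N -> T a b = 0.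
Proof.
move=> + hb; elim: a => [//|a IH] ha.
case: (ltnP a 1) => a1.
  have -> : a = 0%N by lia.
  exact: TB.
rewrite step /=; last lia.
by rewrite TB // mulb0l IH ?mulb0r ?addr0 //; lia.
Qed.

Lemma TD : mul w (e 1) = 0.
Proof.
have h := Leib (e n) (e 1) (e 1).
rewrite mul_n1 th0l thxx mulb0r addr0 Hs mulNl in h.
by apply/eqP; rewrite -oppr_eq0 -h.
Qed.


Lemma wlow (i : 'I_n) : (i < n.-2)%N -> w 0 i = 0.
Proof.
move=> hi; have hi1 : (i.+1 < n)%N by lia.
have := congr1 (fun M : RV => M 0 (Ordinal hi1)) TD.
rewrite /= (@mulE_r 1 o0) // mxE (bigD1 i) //= big1 ?addr0.
  by rewrite H1 ?addn1 ?eqxx ?mulr1 //; lia.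
move=> j hj; case: (leqP j.+2 n.-1) => hj2.
  rewrite H1 ?addn1 //; try lia.
  case: eqP => [h|]; last by rewrite mulr0.
  by exfalso; move/eqP: hj; apply; apply: val_inj => /=; lia.
have hjn := ltn_ord j.
have [->|->] : (j.+1 = n.-1 \/ j.+1 = n)%N by lia.
  by rewrite H2a ?mulr0 //; lia.
by rewrite H2c ?mulr0 //; lia.
Qed.

Lemma wdec : w = w 0 o2 *: e n.-1 + w 0 oN *: e n.
Proof.
apply/rowP => k; rewrite !mxE.
have hkn := ltn_ord k; case: (ltnP k n.-2) => hk.
  rewrite wlow //.
  have -> : (k.+1 == n.-1) = false by apply/negbTE/eqP; lia.
  have -> : (k.+1 == n) = false by apply/negbTE/eqP; lia.
  by rewrite !mulr0 addr0.
have [hk'|hk'] : ((k:nat) = n.-2 \/ (k:nat) = n.-1)%N by lia.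
  have -> : (k.+1 == n.-1) = true by apply/eqP; lia.
  have -> : (k.+1 == n) = false by apply/negbTE/eqP; lia.
  have -> : k = o2 by apply: val_inj.
  by rewrite mulr0 mulr1 addr0.
have -> : (k.+1 == n.-1) = false by apply/negbTE/eqP; lia.
have -> : (k.+1 == n) = true by apply/eqP; lia.
have -> : k = oN by apply: val_inj.
by rewrite mulr0 mulr1 add0r.
Qed.

Lemma mul_wb b : (1 <= b <= n.-2)%N -> mul w (e b) = 0.
Proof.
move=> hb; rewrite wdec mulDl !mulZl !mul_bb0 ?scaler0 ?addr0 //; try lia.
- by move=> k; apply: H2c; lia.
- by move=> k; apply: H2a; lia.
Qed.

Lemma mul_1w : mul (e 1) w = 0.
Proof.
rewrite wdec mulDr !mulZr !mul_bb0 ?scaler0 ?addr0 //; try lia.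
- by move=> k; apply: H2d; lia.
- by move=> k; apply: H2b; lia.
Qed.

Lemma TG a : (2 <= a <= n.-1)%N -> T a n = 0.
Proof.
elim: a => [//|a IH] ha.
rewrite step /=; last lia.
rewrite mul_wb; last lia.
case: (ltnP a 2) => a2.
  have -> : a = 1%N by lia.
  by rewrite mul_1w addr0.
by rewrite IH ?mulb0r ?addr0 //; lia.
Qed.

Lemma neqF (x y : nat) : x <> y -> (x == y) = false.
Proof. by move/eqP/negbTE. Qed.

Lemma TH a b : (1 <= a <= n)%N -> (1 <= b <= n)%N -> T a b = Delta_c K n a b *: w.
Proof.
move=> ha hb; rewrite /Delta_c.
case: (ltnP a n) => ha'; case: (ltnP b n) => hb'.
- rewrite TC; try lia.
  rewrite (@neqF b n) ?(@neqF a n) ?andbF /= ?subrr ?scale0r //; lia.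
- have -> : b = n by lia.
  rewrite eqxx (@neqF a n) ?andbT /=; last lia.
  case: (ltnP a 2) => a2.
    have -> : a = 1%N by lia.
    by rewrite eqxx subr0 scale1r.
  rewrite TG ?(@neqF a 1) ?subrr ?scale0r //; lia.
- have -> : a = n by lia.
  rewrite Hs eqxx (@neqF b n) ?andbF /=; last lia.
  case: (ltnP b 2) => b2.
    have -> : b = 1%N by lia.
    by rewrite eqxx sub0r scaleN1r.
  rewrite TG ?oppr0 ?(@neqF b 1) /= ?subrr ?scale0r //; lia.
- have -> : a = n by lia. have -> : b = n by lia.
  rewrite thxx eqxx (@neqF n 1) /= ?subrr ?scale0r //; lia.
Qed.

Lemma thm_gen (x y : RV) : th x y = Delta1n x y *: w.
Proof.
rewrite {1}(row_decomp x) thsum_l /Delta1n scaler_suml.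
apply: eq_bigr => l _.
rewrite {1}(row_decomp y) thsum_r scaler_sumr scaler_suml.
apply: eq_bigr => m _.
have := ltn_ord l; have := ltn_ord m => hm hl.
by rewrite TH ?scalerA ?mulrA //; lia.
Qed.

Lemma thm_gen2 (x y : RV) :
  th x y = (w 0 o2 * Delta1n x y) *: e n.-1 + (w 0 oN * Delta1n x y) *: e n.
Proof. by rewrite thm_gen {1}wdec scalerDr !scalerA ![_ * Delta1n _ _]mulrC. Qed.

End Gen.

Section Conv.
Variable K : fieldType.
Variable n : nat.
Hypothesis hn : (3 < n)%N.
Local Notation e k := (bvec K n k).
Local Notation RV := 'rV[K]_n.
Local Notation o0 := (o0 hn).
Local Notation oN := (oN hn).
Local Notation o2 := (o2 hn).

Lemma DeltaE (x y : RV) : Delta1n x y = x 0 o0 * y 0 oN - x 0 oN * y 0 o0.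
Proof.
have hD : forall l m : 'I_n, Delta_c K n l.+1 m.+1 =
    (e 1) 0 l * (e n) 0 m - (e n) 0 l * (e 1) 0 m.
  move=> l m; rewrite !mxE /Delta_c.
  by do ! case: eqP => /= ?; rewrite ?mulr1 ?mulr0 ?mul0r ?mul1r ?subr0 ?sub0r.
have hoN : (nat_of_ord oN).+1 = n by rewrite /= prednK //; lia.
have s1 : \sum_(m < n) (e n) 0 m * y 0 m = y 0 oN by rewrite (@sum_bvec K n n oN).
have s2 : \sum_(m < n) (e 1) 0 m * y 0 m = y 0 o0 by rewrite (@sum_bvec K n 1 o0).
rewrite /Delta1n.
transitivity (\sum_(l < n) ((e 1) 0 l * (x 0 l * \sum_(m < n) (e n) 0 m * y 0 m)
                           - (e n) 0 l * (x 0 l * \sum_(m < n) (e 1) 0 m * y 0 m))).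
  apply: eq_bigr => l _; rewrite !mulr_sumr -sumrB; apply: eq_bigr => m _.
  rewrite hD; ring.
by rewrite s1 s2 sumrB (@sum_bvec K n 1 o0) // (@sum_bvec K n n oN).
Qed.

Variable c : nat -> nat -> nat -> K.
Local Notation mul := (bilin_of c).
Hypothesis H3a : forall i j, c i j 1 = 0.
Hypothesis H3b : forall i j, c i j n = 0.
Variable v : RV.
Hypothesis Hv1 : forall y, mul v y = 0.
Hypothesis Hv2 : forall x, mul x v = 0.

Lemma mul_o0 (x y : RV) : (mul x y) 0 o0 = 0.
Proof.
rewrite mxE big1 // => i _; rewrite big1 // => j _.
by rewrite /= H3a mulr0.
Qed.
Lemma mul_oN (x y : RV) : (mul x y) 0 oN = 0.
Proof.
rewrite mxE big1 // => i _; rewrite big1 // => j _.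
by rewrite /= prednK ?H3b ?mulr0 //; lia.
Qed.

Lemma conv : in_Z2 mul (fun x y => Delta1n x y *: v).
Proof.
split.
- move=> a x y z; rewrite !DeltaE !mxE scalerA -scalerDl; congr (_ *: _); ring.
- move=> a x y z; rewrite !DeltaE !mxE scalerA -scalerDl; congr (_ *: _); ring.
- by move=> x y; rewrite -scaleNr !DeltaE; congr (_ *: _); ring.
- move=> x y z; rewrite -!scalerDl.
  rewrite (_ : _ + _ = 0) ?scale0r //.
  rewrite !DeltaE !mxE; ring.
- move=> x y z; rewrite mulZl mulZr Hv1 Hv2 !scaler0 !subr0.
  by rewrite DeltaE mul_o0 mul_oN !mul0r subrr scale0r.
Qed.
End Conv.

From Stdlib Require Import FunctionalExtensionality.
Unset Implicit Arguments. Set Strict Implicit.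

Ltac solc := rewrite /mu11_c /mu12_c; repeat (case: ifP => ?); try done; exfalso; lia.

Theorem lemma3p7 (R : realType) (n : nat) (hn : (3 < n)%N) :
  (forall theta : 'rV[R[i]]_n -> 'rV[R[i]]_n -> 'rV[R[i]]_n,
     in_Z2 (@mu11 R[i] n) theta <->
     exists alpha beta : R[i], forall x y,
       theta x y = (alpha * Delta1n x y) *: bvec R[i] n n.-1
                   + (beta * Delta1n x y) *: bvec R[i] n n) /\
  (forall theta : 'rV[R[i]]_n -> 'rV[R[i]]_n -> 'rV[R[i]]_n,
     in_Z2 (@mu12 R[i] n) theta <->
     exists alpha : R[i], forall x y,
       theta x y = (alpha * Delta1n x y) *: bvec R[i] n n.-1).
Proof.
have two : (2 : R[i]) != 0 by rewrite pnatr_eq0.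
have hoN : (nat_of_ord (oN hn)).+1 = n by rewrite /= prednK //; lia.
have ho2 : (nat_of_ord (o2 hn)).+1 = n.-1 by rewrite /=; lia.
have H11 : forall a b k, (1 <= a)%N -> (1 <= b)%N -> (a + b <= n.-1)%N ->
  (mu11_c R[i] n) a b k = if (k == a + b)%N then 1 else 0 by move=> *; solc.
have H21 : forall a b k, (1 <= a)%N -> (1 <= b)%N -> (a + b <= n.-1)%N ->
  (mu12_c R[i] n) a b k = if (k == a + b)%N then 1 else 0 by move=> *; solc.
have H1a : forall b k, (1 <= b)%N -> (mu11_c R[i] n) n.-1 b k = 0 by move=> *; solc.
have H1b : forall b k, (1 <= b)%N -> (mu11_c R[i] n) b n.-1 k = 0 by move=> *; solc.
have H1c : forall b k, (mu11_c R[i] n) n b k = 0 by move=> *; solc.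
have H1d : forall b k, (mu11_c R[i] n) b n k = 0 by move=> *; solc.
have H2a : forall b k, (1 <= b)%N -> (mu12_c R[i] n) n.-1 b k = 0 by move=> *; solc.
have H2b : forall b k, (1 <= b)%N -> (mu12_c R[i] n) b n.-1 k = 0 by move=> *; solc.
have H2c : forall b k, (1 <= b)%N -> (b <= n.-2)%N -> (mu12_c R[i] n) n b k = 0 by move=> *; solc.
have H2d : forall b k, (1 <= b)%N -> (b <= n.-2)%N -> (mu12_c R[i] n) b n k = 0 by move=> *; solc.
have H31 : forall i j, (mu11_c R[i] n) i j 1 = 0 by move=> *; solc.
have H32 : forall i j, (mu11_c R[i] n) i j n = 0 by move=> *; solc.
have H41 : forall i j, (mu12_c R[i] n) i j 1 = 0 by move=> *; solc.
have H42 : forall i j, (mu12_c R[i] n) i j n = 0 by move=> *; solc.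
split => th; split.
- case=> HL HR Hs _ Hl.
  exists (th (bvec _ n 1) (bvec _ n n) 0 (o2 hn)), (th (bvec _ n 1) (bvec _ n n) 0 (oN hn)).
  exact: (@thm_gen2 _ n (mu11_c R[i] n) hn H11 (fun b k h _ => H1a b k h) (fun b k h _ => H1b b k h)
           (fun b k _ _ => H1c b k) (fun b k _ _ => H1d b k) th HL HR Hs Hl two).
- case=> a [b Hth].
  have -> : th = (fun x y => Delta1n x y *: (a *: bvec _ n n.-1 + b *: bvec _ n n)).
    apply: functional_extensionality => x; apply: functional_extensionality => y.
    by rewrite Hth scalerDr !scalerA ![_ * Delta1n _ _]mulrC.
  have Hv1 : forall y : 'rV[R[i]]_n, bilin_of (mu11_c R[i] n) (a *: bvec _ n n.-1 + b *: bvec _ n n) y = 0.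
    move=> y; rewrite mulDl !mulZl (mul_zero_l _ ho2) ?(mul_zero_l _ hoN) ?scaler0 ?addr0 //;
    by move=> j k hj; first [exact: H1a | exact: H1b | exact: H1c | exact: H1d].
  have Hv2 : forall x : 'rV[R[i]]_n, bilin_of (mu11_c R[i] n) x (a *: bvec _ n n.-1 + b *: bvec _ n n) = 0.
    move=> x; rewrite mulDr !mulZr (mul_zero_r _ ho2) ?(mul_zero_r _ hoN) ?scaler0 ?addr0 //;
    by move=> j k hj; first [exact: H1a | exact: H1b | exact: H1c | exact: H1d].
  exact: (@conv _ n hn (mu11_c R[i] n) H31 H32 _ Hv1 Hv2).
- case=> HL HR Hs _ Hl.
  have G1 : forall b k, (1 <= b)%N -> (b <= n.-2)%N -> mu12_c R[i] n n.-1 b k = 0.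
    by move=> b k h _; exact: H2a.
  have G2 : forall b k, (1 <= b)%N -> (b <= n.-2)%N -> mu12_c R[i] n b n.-1 k = 0.
    by move=> b k h _; exact: H2b.
  have hwN : th (bvec _ n 1) (bvec _ n n) 0 (oN hn) = 0.
    have h := Leib Hl (bvec _ n n) (bvec _ n n) (bvec _ n 1).
    have hnn : bilin_of (mu12_c R[i] n) (bvec _ n n) (bvec _ n n) = bvec _ n n.-1.
      apply/rowP => k; rewrite (mul_bb _ _ hoN hoN) mxE; solc.
    have hn1 : bilin_of (mu12_c R[i] n) (bvec _ n n.-1) (bvec _ n n) = 0.
      by apply: (mul_zero_l _ ho2) => *; apply: H2a.
    have hn2 : bilin_of (mu12_c R[i] n) (bvec _ n n) (bvec _ n n.-1) = 0.
      by apply: (mul_zero_r _ ho2) => *; apply: H2b.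
    rewrite hnn (@TA _ n (mu12_c R[i] n) hn H21 th Hs Hl two n.-1) in h; last lia.
    rewrite (Hs (bvec _ n n) (bvec _ n 1)) mulNl mulNr in h.
    rewrite (@wdec _ n (mu12_c R[i] n) hn H21 G1 H2c th HL Hs Hl two) in h.
    rewrite mulDl mulDr !mulZl !mulZr hn1 hn2 hnn !scaler0 !add0r in h.
    have := congr1 (fun M : 'rV[R[i]]_n => M 0 (o2 hn)) h.
    rewrite !mxE ho2 eqxx mulr1 /=.
    move/eqP; rewrite eq_sym -opprD oppr_eq0 -mulr2n -mulr_natl mulf_eq0 (negbTE two) /=.
    by move=> /eqP H; exact: H.
  exists (th (bvec _ n 1) (bvec _ n n) 0 (o2 hn)) => x y.
  rewrite (@thm_gen2 _ n (mu12_c R[i] n) hn H21 G1 G2 H2c H2d th HL HR Hs Hl two x y).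
  by rewrite hwN mul0r scale0r addr0.
- case=> a Hth.
  have -> : th = (fun x y => Delta1n x y *: (a *: bvec _ n n.-1)).
    apply: functional_extensionality => x; apply: functional_extensionality => y.
    by rewrite Hth !scalerA mulrC.
  have Hv1 : forall y : 'rV[R[i]]_n, bilin_of (mu12_c R[i] n) (a *: bvec _ n n.-1) y = 0.
    by move=> y; rewrite !mulZl (mul_zero_l _ ho2) ?scaler0.
  have Hv2 : forall x : 'rV[R[i]]_n, bilin_of (mu12_c R[i] n) x (a *: bvec _ n n.-1) = 0.
    by move=> x; rewrite !mulZr (mul_zero_r _ ho2) ?scaler0.
  exact: (@conv _ n hn (mu12_c R[i] n) H41 H42 _ Hv1 Hv2).
Qed.
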